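(* Let $\mathfrak g$ be a finite-dimensional simple complex Lie algebra with root lattice $Q$ and weight lattice $\Lambda$. Then: (a) if $\mathfrak g$ is of type $A_{2k}$ ($k\ge1$) or $E_6$, then $Q\cap2\Lambda=2Q$ and $2Q\ne2\Lambda$; (b) if $\mathfrak g$ is of type $A_1$, $B_n$, $C_n$, $D_{2k+2}$ or $E_7$, then $Q\cap2\Lambda=2\Lambda$ and $2\Lambda\ne2Q$; (c) if $\mathfrak g$ is of type $E_8$, $F_4$ or $G_2$, then $Q\cap2\Lambda=2\Lambda=2Q$; (d) if $\mathfrak g$ is of type $A_{2k+1}$ or $D_{2k+3}$ with $k\ge1$, then $Q\cap2\Lambda=2Q+\mathbb Z\alpha^\diamond$ and $2Q+\mathbb Z\alpha^\diamond\ne2\Lambda$. Moreover, if $\mathfrak g$ is of type $D_n$ with $n$ odd, then $2Q+\mathbb Z\alpha^\diamond=4\mathbb Z\lambda_{n-1}+4\mathbb Z\lambda_n+\mathbb Z\alpha^\diamond+\sum_{i=1}^{n-2}2\mathbb Z\lambda_i$.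
   Context: Simple roots $\alpha_1,\dots,\alpha_n$ and fundamental weights $\lambda_1,\dots,\lambda_n$ are labelled by the Dynkin diagrams: $A_n$: chain $1-2-\cdots-n$; $D_n$: chain $1-2-\cdots-(n-2)$ with nodes $n-1$ and $n$ both attached to node $n-2$. $Q=\bigoplus_i\mathbb Z\alpha_i$, $\Lambda=\bigoplus_i\mathbb Z\lambda_i$. Define $\alpha^\diamond=\sum_{i\text{ odd}}\alpha_i$ if $\mathfrak g$ is of type $A_n$, and $\alpha^\diamond=\alpha_{n-1}+\alpha_n$ if $\mathfrak g$ is of type $D_n$. *)

(* Defs.v *)
(* Root and weight lattices of a simple Lie algebra, described
   in the basis of fundamental weights: Lambda = Z^n = (+)_i Z lambda_i and
   alpha_i = sum_j <alpha_i, alpha_j^vee> lambda_j (rows of the Cartan matrix). *)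
From mathcomp Require Import all_boot all_order all_algebra.
Set Implicit Arguments. Unset Strict Implicit. Unset Printing Implicit Defensive.
Import Order.TTheory GRing.Theory Num.Theory.
Local Open Scope ring_scope.

Inductive dynkin := TA | TB | TC | TD | TE | TF | TG.

(* Directed edge i -> j (i < j) of the Dynkin diagram, 1-based Bourbaki labels. *)
Definition link (t : dynkin) (n i j : nat) : bool :=
  match t with
  | TA | TB | TC | TF | TG => (j == i.+1) && (1 <= i)%N && (j <= n)%N
  | TD => ((j == i.+1) && (1 <= i)%N && (j <= n.-1)%N) || ((i == n - 2)%N && (j == n))
  | TE => ((i == 1%N) && (j == 3%N)) || ((i == 2%N) && (j == 4%N))
          || ((j == i.+1) && (3 <= i)%N && (j <= n)%N)
  end.

Definition adj (t : dynkin) (n i j : nat) : bool := link t n i j || link t n j i.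

(* squared length of alpha_i (short roots have length 1) *)
Definition len (t : dynkin) (n i : nat) : nat :=
  match t with
  | TA | TD | TE => 1
  | TB => if i == n then 1 else 2
  | TC => if i == n then 2 else 1
  | TF => if (i <= 2)%N then 2 else 1
  | TG => if i == 2%N then 3 else 1
  end.

(* cartan t n i j = <alpha_i, alpha_j^vee> = 2 (alpha_i,alpha_j)/(alpha_j,alpha_j),
   the coefficient of lambda_j in alpha_i *)
Definition cartan (t : dynkin) (n i j : nat) : int :=
  if i == j then 2
  else if adj t n i j then - ((maxn (len t n i %/ len t n j) 1)%N%:Z)
  else 0.

(* fundamental weight lambda_i and simple root alpha_i (1-based i) in 'rV[int]_n *)
Definition lambda (n i : nat) : 'rV[int]_n := \row_(j < n) ((j.+1 == i)%:R).
Definition alpha (t : dynkin) (n i : nat) : 'rV[int]_n := \row_(j < n) cartan t n i j.+1.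

Definition lat n := 'rV[int]_n -> Prop.

Definition zspan n (I : finType) (g : I -> 'rV[int]_n) : lat n :=
  fun v => exists c : I -> int, v = \sum_(i : I) g i *~ c i.

Definition Zmul n (a : 'rV[int]_n) : lat n := zspan (fun _ : 'I_1 => a).
Definition latI n (S T : lat n) : lat n := fun v => S v /\ T v.
Definition latD n (S T : lat n) : lat n := fun v => exists s t, S s /\ T t /\ v = s + t.
Definition lat2 n (S : lat n) : lat n := fun v => exists w, S w /\ v = w *+ 2.
Definition lat_eq n (S T : lat n) : Prop := forall v, S v <-> T v.

Definition rootQ (t : dynkin) (n : nat) : lat n := zspan (fun i : 'I_n => alpha t n i.+1).
Definition weightL (n : nat) : lat n := zspan (fun i : 'I_n => lambda n i.+1).

Definition alpha_diamond (t : dynkin) (n : nat) : 'rV[int]_n :=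
  match t with
  | TA => \sum_(i < n | odd i.+1) alpha t n i.+1
  | TD => alpha t n n.-1 + alpha t n n
  | _ => 0
  end.

Arguments lambda : clear implicits.
Arguments alpha : clear implicits.
Arguments rootQ : clear implicits.
Arguments weightL : clear implicits.
Arguments alpha_diamond : clear implicits.

(* Main.v *)
Require Import Defs.
From mathcomp Require Import all_boot all_order all_algebra zify ring.
Import GRing.Theory Num.Theory.
Local Open Scope ring_scope.
Set Implicit Arguments. Unset Strict Implicit. Unset Printing Implicit Defensive.

Lemma mxz_entry m n (A : 'M[int]_(m,n)) (z : int) i j : (A *~ z) i j = A i j * z.
Proof. case: z => k. by rewrite mulmxnE -mulrzz. by rewrite NegzE !mulrNz mxE mulmxnE -mulrzz mulrNz. Qed.

Section ZS.
Variables (n : nat) (I : finType) (g : I -> 'rV[int]_n).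
Lemma zs0 : zspan g 0.
Proof. exists (fun _ => 0); by rewrite big1 // => i _; rewrite mulr0z. Qed.
Lemma zsD x y : zspan g x -> zspan g y -> zspan g (x + y).
Proof. move=> [c ->] [d ->]; exists (fun i => c i + d i).
by rewrite -big_split /=; apply: eq_bigr => i _; rewrite mulrzDr. Qed.
Lemma zsZ x z : zspan g x -> zspan g (x *~ z).
Proof. move=> [c ->]; exists (fun i => c i * z).
rewrite mulrz_suml; apply: eq_bigr => i _; by rewrite mulrzA. Qed.
Lemma zsN x : zspan g x -> zspan g (- x).
Proof. move=> h; rewrite -mulrN1z; exact: zsZ. Qed.
Lemma zsB x y : zspan g x -> zspan g y -> zspan g (x - y).
Proof. move=> h1 h2; apply: zsD h1 (zsN h2). Qed.
Lemma zsMn x k : zspan g x -> zspan g (x *+ k).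
Proof. move=> h; rewrite pmulrn; exact: zsZ. Qed.
Lemma zsG k : zspan g (g k).
Proof. exists (fun i => if i == k then 1 else 0); rewrite (bigD1 k) //= eqxx mulr1z big1 ?addr0 // => i /negbTE ->.
by rewrite mulr0z. Qed.
Lemma zs_sum (J : finType) (P : pred J) (f : J -> 'rV[int]_n) :
  (forall j, P j -> zspan g (f j)) -> zspan g (\sum_(j | P j) f j).
Proof. move=> h; apply: (big_ind (zspan g)) => //; [exact: zs0| exact: zsD]. Qed.
End ZS.

Definition F n (w : nat -> int) (x : 'rV[int]_n) : int := \sum_(j < n) w j.+1 * x 0 j.

Lemma F_add n w (x y : 'rV[int]_n) : F w (x + y) = F w x + F w y.
Proof. rewrite /F -big_split; apply: eq_bigr => j _; by rewrite mxE mulrDr. Qed.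
Lemma F_mulz n w (x : 'rV[int]_n) z : F w (x *~ z) = F w x * z.
Proof. rewrite /F mulr_suml; apply: eq_bigr => j _; by rewrite mxz_entry mulrA. Qed.
Lemma F_opp n w (x : 'rV[int]_n) : F w (- x) = - F w x.
Proof. by rewrite -mulrN1z F_mulz mulrN1. Qed.
Lemma F_sub n w (x y : 'rV[int]_n) : F w (x - y) = F w x - F w y.
Proof. by rewrite F_add F_opp. Qed.
Lemma F_muln n w (x : 'rV[int]_n) k : F w (x *+ k) = F w x *+ k.
Proof. by rewrite pmulrn F_mulz -mulrzz pmulrn. Qed.
Lemma F_sum n w (J : finType) (P : pred J) (f : J -> 'rV[int]_n) :
  F w (\sum_(j | P j) f j) = \sum_(j | P j) F w (f j).
Proof. rewrite /F exchange_big /=; apply: eq_bigr => j _; rewrite summxE mulr_sumr //. Qed.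

Lemma F_lambda n w i : F w (lambda n i) = if (0 < i <= n)%N then w i else 0.
Proof.
rewrite /F; case: ifP => hi.
  have hk : (i.-1 < n)%N by lia.
  rewrite (bigD1 (Ordinal hk)) //= big1 ?addr0.
    rewrite mxE /= prednK ?eqxx ?mulr1 //; lia.
  move=> j hj; rewrite mxE; case: eqP => [e|]; last by rewrite mulr0.
  by case/eqP: hj; apply: val_inj => /=; lia.
rewrite big1 // => j _; rewrite mxE; case: eqP => [e|]; last by rewrite mulr0.
exfalso; move/negbT: hi; have := ltn_ord j; lia.
Qed.

Lemma F_inv t n w (m : int) v :
  (forall i, (0 < i <= n)%N -> (m %| F w (alpha t n i))%Z) -> rootQ t n v -> (m %| F w v)%Z.
Proof.
move=> h [c ->]; rewrite F_sum; apply: (big_ind (fun x => m %| x)%Z) => //.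
  by move=> x y hx hy; apply: rpredD.
move=> i _; rewrite F_mulz dvdz_mulr //; apply: h; have := ltn_ord i; lia.
Qed.

Lemma Q_alpha t n i : (0 < i <= n)%N -> rootQ t n (alpha t n i).
Proof.
move=> hi; have hk : (i.-1 < n)%N by lia.
have -> : i = (Ordinal hk).+1 by rewrite /= prednK //; lia.
exact: (zsG (fun i : 'I_n => alpha t n i.+1)).
Qed.

Lemma L_all n v : weightL n v.
Proof.
exists (fun i => v 0 i); apply/rowP => j; rewrite summxE (bigD1 j) //= big1.
  by rewrite mxz_entry !mxE eqxx mul1r addr0.
move=> i hij; rewrite mxz_entry mxE; case: eqP => [e|]; last by rewrite mul0r.
by case/eqP: hij; apply: val_inj => /=; lia.
Qed.

Lemma vec_ext n (x y : 'rV[int]_n) : (forall j : 'I_n, x 0 j = y 0 j) -> x = y.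
Proof. move=> h; apply/rowP => j; exact: h. Qed.

Lemma lat2L n v : lat2 (weightL n) v <-> forall j : 'I_n, (2 %| v ord0 j)%Z.
Proof.
split.
  move=> [w [_ ->]] j; rewrite mulmxnE; apply/dvdzP; exists (w ord0 j); rewrite mulr2n; ring.
move=> h; exists (\row_j (v ord0 j %/ 2)%Z); split; first exact: L_all.
apply/rowP => j; rewrite mulmxnE mxE; have := h j; move/dvdz_mod0P.
have := divz_eq (v ord0 j) 2; move: (v ord0 j) => a.
rewrite mulr2n; lia.
Qed.

Lemma mul2_inj n (x y : 'rV[int]_n) : x *+ 2 = y *+ 2 -> x = y.
Proof. move=> e; apply/rowP => j; have := congr1 (fun A : 'rV[int]_n => A 0 j) e => /=.
rewrite !mulmxnE !mulr2n; move: (x 0 j) (y 0 j) => a b; lia. Qed.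

Ltac vtac := apply/rowP => ?; rewrite !(mxE, mulmxnE, mxz_entry); ring.

Lemma lambda0 n : lambda n 0 = 0.
Proof. by apply/rowP => j; rewrite !mxE. Qed.
Lemma lambda_out n i : (n < i)%N -> lambda n i = 0.
Proof. move=> h; apply/rowP => j; rewrite !mxE; case: eqP => //; have := ltn_ord j; lia. Qed.

Lemma chain t n m : (forall i, (0 < i <= m)%N -> alpha t n i = lambda n i *+ 2 - lambda n i.-1 - lambda n i.+1) ->
  (m <= n)%N -> forall i, (i <= m.+1)%N -> rootQ t n (lambda n i - lambda n 1 *+ i).
Proof.
move=> ha hm.
suff H : forall i, (i <= m)%N -> rootQ t n (lambda n i - lambda n 1 *+ i) /\ rootQ t n (lambda n i.+1 - lambda n 1 *+ i.+1).
  move=> [|i] hi; first by case: (H 0%N isT).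
  by case: (H i hi).
elim => [|i IH] hi.
  by rewrite lambda0 !subrr; split; apply: zs0.
case: (IH (ltnW hi)) => h1 h2; split => //.
have -> : lambda n i.+2 - lambda n 1 *+ i.+2 = (lambda n i.+1 - lambda n 1 *+ i.+1) *+ 2 - (lambda n i - lambda n 1 *+ i) - alpha t n i.+1.
  rewrite ha /=; last by lia.
  vtac.
apply: zsB; first apply: zsB; [exact: zsMn | by [] | apply: Q_alpha; lia].
Qed.

Lemma L_span n (u : 'rV[int]_n) : u = \sum_(i < n) lambda n i.+1 *~ u 0 i.
Proof.
case: (L_all u) => c e.
have hc : forall i, c i = u 0 i.
  move=> i; rewrite e summxE (bigD1 i) //= big1 ?addr0; first by rewrite mxz_entry mxE eqxx mul1r.
  move=> k hk; rewrite mxz_entry mxE; case: eqP => [e3|_]; last by rewrite mul0r.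
  by case/eqP: hk; apply: val_inj => /=; lia.
by rewrite {1}e; apply: eq_bigr => i _; rewrite hc.
Qed.

Lemma mulrzn n (x : 'rV[int]_n) (z : int) N : (x *~ z) *+ N = (x *+ N) *~ z.
Proof. by rewrite !pmulrn -!mulrzA mulrC. Qed.

Lemma Q_allN t n N : (forall i, (0 < i <= n)%N -> rootQ t n (lambda n i *+ N)) -> forall u, rootQ t n (u *+ N).
Proof.
move=> h u; rewrite (L_span u) -sumrMnl; apply: zs_sum => i _.
rewrite mulrzn; apply: zsZ; apply: h; have := ltn_ord i; lia.
Qed.

Lemma gen_odd t n N : odd N -> (forall i, (0 < i <= n)%N -> rootQ t n (lambda n i *+ N)) ->
  lat_eq (latI (rootQ t n) (lat2 (weightL n))) (lat2 (rootQ t n)).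
Proof.
move=> hN h v; split.
  move=> [hQ [u [_ e]]]; exists u; split => //.
  have -> : u = v *+ (N./2).+1 - u *+ N.
    rewrite e -{2}(odd_double_half N) hN -addnn /=; vtac.
  apply: zsB; [exact: zsMn | exact: Q_allN].
move=> [w [hw ->]]; split; first exact: zsMn.
by exists w; split => //; apply: L_all.
Qed.

Lemma gen_two t n : (forall i, (0 < i <= n)%N -> rootQ t n (lambda n i *+ 2)) ->
  lat_eq (latI (rootQ t n) (lat2 (weightL n))) (lat2 (weightL n)).
Proof.
move=> h v; split; first by case.
move=> hv; split => //; case: hv => u [_ ->]; exact: Q_allN.
Qed.

Lemma gen_neq_a t n v : ~ rootQ t n v -> ~ lat_eq (lat2 (rootQ t n)) (lat2 (weightL n)).
Proof.
move=> h E; case: (proj2 (E (v *+ 2))); first by exists v; split => //; apply: L_all.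
by move=> w [hw /mul2_inj e]; apply: h; rewrite e.
Qed.

Lemma gen_neq_b t n v : ~ rootQ t n v -> ~ lat_eq (lat2 (weightL n)) (lat2 (rootQ t n)).
Proof.
move=> h E; case: (proj1 (E (v *+ 2))); first by exists v; split => //; apply: L_all.
by move=> w [hw /mul2_inj e]; apply: h; rewrite e.
Qed.

Lemma gen_all t n : (forall i, (0 < i <= n)%N -> rootQ t n (lambda n i)) ->
  lat_eq (latI (rootQ t n) (lat2 (weightL n))) (lat2 (weightL n)) /\
  lat_eq (lat2 (weightL n)) (lat2 (rootQ t n)).
Proof.
move=> h.
have hall : forall u, rootQ t n u.
  move=> u; rewrite -(mulr1n u); apply: Q_allN => i hi; rewrite mulr1n; exact: h.
split; first by apply: gen_two => i _; apply: hall.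
move=> v; split.
  by move=> [w [_ ->]]; exists w; split => //; apply: hall.
by move=> [w [_ ->]]; exists w; split => //; apply: L_all.
Qed.

Ltac crush := rewrite /cartan /adj /link /len;
  repeat (case: eqP => ?; try (exfalso; lia)); repeat (case: leqP => ?; try (exfalso; lia)); simpl; try lia.
Ltac rowt := apply/rowP => j; rewrite !mxE; have := ltn_ord j; crush.

Lemma alphaB1 n i : (0 < i)%N -> (i <= n - 2)%N -> alpha TB n i = lambda n i *+ 2 - lambda n i.-1 - lambda n i.+1.
Proof. move=> h1 h2; rowt. Qed.
Lemma alphaB2 n : (2 <= n)%N -> alpha TB n n.-1 = lambda n n.-1 *+ 2 - lambda n n.-2 - lambda n n *+ 2.
Proof. move=> h1; rowt. Qed.
Lemma alphaB3 n : (2 <= n)%N -> alpha TB n n = lambda n n *+ 2 - lambda n n.-1.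
Proof. move=> h1; rowt. Qed.
Lemma alphaC1 n i : (0 < i)%N -> (i <= n - 2)%N -> alpha TC n i = lambda n i *+ 2 - lambda n i.-1 - lambda n i.+1.
Proof. move=> h1 h2; rowt. Qed.
Lemma alphaC2 n : (2 <= n)%N -> alpha TC n n.-1 = lambda n n.-1 *+ 2 - lambda n n.-2 - lambda n n.
Proof. move=> h1; rowt. Qed.
Lemma alphaC3 n : (2 <= n)%N -> alpha TC n n = lambda n n *+ 2 - lambda n n.-1 *+ 2.
Proof. move=> h1; rowt. Qed.
Lemma alphaD1 n i : (0 < i)%N -> (i <= n - 3)%N -> alpha TD n i = lambda n i *+ 2 - lambda n i.-1 - lambda n i.+1.
Proof. move=> h1 h2; rowt. Qed.
Lemma alphaD2 n : (4 <= n)%N -> alpha TD n (n-2) = lambda n (n-2) *+ 2 - lambda n (n-3) - lambda n n.-1 - lambda n n.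
Proof. move=> h1; rowt. Qed.
Lemma alphaD3 n : (4 <= n)%N -> alpha TD n n.-1 = lambda n n.-1 *+ 2 - lambda n (n-2).
Proof. move=> h1; rowt. Qed.
Lemma alphaD4 n : (4 <= n)%N -> alpha TD n n = lambda n n *+ 2 - lambda n (n-2).
Proof. move=> h1; rowt. Qed.
Lemma alphaA n i : (0 < i <= n)%N -> alpha TA n i = lambda n i *+ 2 - lambda n i.-1 - lambda n i.+1.
Proof. move=> hi; rowt. Qed.


Ltac iftac := repeat (case: ifP => ?); rewrite ?mulr2n; try lia.

Lemma A_chain n i : (i <= n.+1)%N -> rootQ TA n (lambda n i - lambda n 1 *+ i).
Proof. apply: chain => //; exact: alphaA. Qed.

Lemma A_top n : rootQ TA n (lambda n 1 *+ n.+1).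
Proof.
have := A_chain (leqnn n.+1); rewrite lambda_out // sub0r => h.
by rewrite -[X in rootQ _ _ X]opprK; apply: zsN.
Qed.

Lemma A_mult n i : (i <= n.+1)%N -> rootQ TA n (lambda n i *+ n.+1).
Proof.
move=> hi.
have -> : lambda n i *+ n.+1 = (lambda n i - lambda n 1 *+ i) *+ n.+1 + (lambda n 1 *+ n.+1) *+ i by vtac.
apply: zsD; apply: zsMn; [exact: A_chain | exact: A_top].
Qed.

Definition wid (j : nat) : int := j%:Z.

Lemma A_F n i : (0 < i <= n)%N -> (n.+1%:Z %| F wid (alpha TA n i))%Z.
Proof.
move=> hi; rewrite alphaA // !F_sub F_muln !F_lambda /wid; iftac; by [apply/dvdzP; exists 0; lia | apply/dvdzP; exists 1; lia].
Qed.

Lemma A_notin n : (0 < n)%N -> ~ rootQ TA n (lambda n 1).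
Proof.
move=> hn h; have := F_inv (@A_F n) h; rewrite F_lambda /wid; iftac.
rewrite dvdzE /= dvdn1; lia.
Qed.




Lemma B_chain n i : (2 <= n)%N -> (i <= n.-1)%N -> rootQ TB n (lambda n i - lambda n 1 *+ i).
Proof. move=> hn hi; apply: (@chain _ _ (n - 2)) => //; [move=> k hk; apply: alphaB1; lia | lia | lia]. Qed.

Lemma B_l1 n : (2 <= n)%N -> rootQ TB n (lambda n 1).
Proof.
case: n => [|[|m]] // _.
have -> : lambda m.+2 1 = alpha TB m.+2 m.+1 + alpha TB m.+2 m.+2
   - (lambda m.+2 m.+1 - lambda m.+2 1 *+ m.+1) + (lambda m.+2 m - lambda m.+2 1 *+ m).
  rewrite (alphaB2 (n:=m.+2)) // (alphaB3 (n:=m.+2)) //=; vtac.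
apply: zsD; first apply: zsB; first apply: zsD.
- by apply: Q_alpha; lia.
- by apply: Q_alpha; lia.
- by apply: B_chain.
- by apply: B_chain => //; lia.
Qed.

Lemma B_two n i : (2 <= n)%N -> (0 < i <= n)%N -> rootQ TB n (lambda n i *+ 2).
Proof.
move=> hn hi; have h1 := B_l1 hn.
have hlow : forall i, (i <= n.-1)%N -> rootQ TB n (lambda n i).
  move=> k hk; have -> : lambda n k = (lambda n k - lambda n 1 *+ k) + lambda n 1 *+ k by vtac.
  by apply: zsD; [exact: B_chain | exact: zsMn].
case: (ltnP i n) => hin; first by apply: zsMn; apply: hlow; lia.
have -> : i = n by lia.
have -> : lambda n n *+ 2 = alpha TB n n + lambda n n.-1 by rewrite alphaB3 //; vtac.
apply: zsD; [apply: Q_alpha; lia | apply: hlow; lia].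
Qed.

Definition wB n (j : nat) : int := if j == n then 1 else 0.

Lemma B_notin n : (2 <= n)%N -> ~ rootQ TB n (lambda n n).
Proof.
move=> hn h.
have H : forall i, (0 < i <= n)%N -> (2 %| F (wB n) (alpha TB n i))%Z.
  move=> i hi; case: (ltnP i n.-1) => h1.
    rewrite alphaB1; try lia. rewrite !F_sub F_muln !F_lambda /wB; iftac.
  case: (ltnP i n) => h2.
    have -> : i = n.-1 by lia. rewrite alphaB2 // !F_sub !F_muln !F_lambda /wB; iftac.
  have -> : i = n by lia. rewrite alphaB3 // !F_sub !F_muln !F_lambda /wB; iftac.
have := F_inv H h; rewrite F_lambda /wB; iftac.
Qed.

Lemma C_ch n i : (2 <= n)%N -> (0 < i <= n.-1)%N ->
  alpha TC n i = lambda n i *+ 2 - lambda n i.-1 - lambda n i.+1.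
Proof.
move=> hn hi; case: (ltnP i n.-1) => h.
  by rewrite alphaC1 //; lia.
have e : i = n.-1 by lia.
rewrite e alphaC2 //; by have -> : (n.-1).+1 = n by lia.
Qed.

Lemma C_chain n i : (2 <= n)%N -> (i <= n)%N -> rootQ TC n (lambda n i - lambda n 1 *+ i).
Proof. move=> hn hi; apply: (@chain _ _ n.-1) => //; [move=> k hk; apply: C_ch => //; lia | lia | lia]. Qed.

Lemma C_2l1 n : (2 <= n)%N -> rootQ TC n (lambda n 1 *+ 2).
Proof.
case: n => [|[|m]] // _.
have -> : lambda m.+2 1 *+ 2 = alpha TC m.+2 m.+2
   - (lambda m.+2 m.+2 - lambda m.+2 1 *+ m.+2) *+ 2 + (lambda m.+2 m.+1 - lambda m.+2 1 *+ m.+1) *+ 2.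
  rewrite (alphaC3 (n:=m.+2)) //=; vtac.
apply: zsD; first apply: zsB.
- by apply: Q_alpha; lia.
- by apply: zsMn; apply: C_chain.
- by apply: zsMn; apply: C_chain => //; lia.
Qed.

Lemma C_two n i : (2 <= n)%N -> (0 < i <= n)%N -> rootQ TC n (lambda n i *+ 2).
Proof.
move=> hn hi.
have -> : lambda n i *+ 2 = (lambda n i - lambda n 1 *+ i) *+ 2 + (lambda n 1 *+ 2) *+ i by vtac.
apply: zsD; apply: zsMn; [apply: C_chain => //; lia | exact: C_2l1].
Qed.

Lemma C_notin n : (2 <= n)%N -> ~ rootQ TC n (lambda n 1).
Proof.
move=> hn h.
have H : forall i, (0 < i <= n)%N -> (2 %| F wid (alpha TC n i))%Z.
  move=> i hi; case: (ltnP i n) => h1.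
    rewrite C_ch; try lia. rewrite !F_sub F_muln !F_lambda /wid; iftac.
  have -> : i = n by lia. rewrite alphaC3 // !F_sub !F_muln !F_lambda /wid; iftac.
have := F_inv H h; rewrite F_lambda /wid; iftac.
Qed.

Lemma D_chain n i : (4 <= n)%N -> (i <= n - 2)%N -> rootQ TD n (lambda n i - lambda n 1 *+ i).
Proof. move=> hn hi; apply: (@chain _ _ (n - 3)) => //; [move=> k hk; apply: alphaD1; lia | lia | lia]. Qed.

Lemma D_2l1 n : (4 <= n)%N -> rootQ TD n (lambda n 1 *+ 2).
Proof.
case: n => [|[|[|[|m]]]] // _.
have -> : lambda m.+4 1 *+ 2 = alpha TD m.+4 m.+2 *+ 2 + alpha TD m.+4 m.+3 + alpha TD m.+4 m.+4
   - (lambda m.+4 m.+2 - lambda m.+4 1 *+ m.+2) *+ 2 + (lambda m.+4 m.+1 - lambda m.+4 1 *+ m.+1) *+ 2.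
  have h2 := alphaD2 (n:=m.+4); have h3 := alphaD3 (n:=m.+4); have h4 := alphaD4 (n:=m.+4).
  have e2 : (m.+4 - 2 = m.+2)%N by lia. have e3 : (m.+4 - 3 = m.+1)%N by lia.
  rewrite e2 /= in h3 h4; rewrite e2 e3 /= in h2.
  rewrite h2 // h3 // h4 //; vtac.
apply: zsD; first apply: zsB; first apply: zsD; first apply: zsD.
- by apply: zsMn; apply: Q_alpha; lia.
- by apply: Q_alpha; lia.
- by apply: Q_alpha; lia.
- by apply: zsMn; apply: D_chain => //; lia.
- by apply: zsMn; apply: D_chain => //; lia.
Qed.

Lemma D_two_low n i : (4 <= n)%N -> (i <= n - 2)%N -> rootQ TD n (lambda n i *+ 2).
Proof.
move=> hn hi.
have -> : lambda n i *+ 2 = (lambda n i - lambda n 1 *+ i) *+ 2 + (lambda n 1 *+ 2) *+ i by vtac.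
apply: zsD; apply: zsMn; [apply: D_chain => //; lia | exact: D_2l1].
Qed.

Lemma D_four_top n : (4 <= n)%N ->
  rootQ TD n (lambda n n.-1 *+ 4) /\ rootQ TD n (lambda n n *+ 4).
Proof.
move=> hn; have hl := D_two_low hn (leqnn (n - 2)).
split.
  have -> : lambda n n.-1 *+ 4 = alpha TD n n.-1 *+ 2 + lambda n (n - 2) *+ 2 by rewrite alphaD3 //; vtac.
  apply: zsD => //; apply: zsMn; apply: Q_alpha; lia.
have -> : lambda n n *+ 4 = alpha TD n n *+ 2 + lambda n (n - 2) *+ 2 by rewrite alphaD4 //; vtac.
apply: zsD => //; apply: zsMn; apply: Q_alpha; lia.
Qed.

Lemma D_two_even n k : n = (2 * k + 2)%N -> (4 <= n)%N -> forall i, (0 < i <= n)%N -> rootQ TD n (lambda n i *+ 2).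
Proof.
move=> en hn i hi.
have hm : rootQ TD n (lambda n (n - 2)).
  have -> : lambda n (n - 2) = (lambda n (n - 2) - lambda n 1 *+ (n - 2)) + (lambda n 1 *+ 2) *+ k.
    have -> : (n - 2 = k + k)%N by lia. vtac.
  by apply: zsD; [apply: D_chain | apply: zsMn; apply: D_2l1].
case: (leqP i (n - 2)) => h1; first exact: D_two_low.
case: (ltnP i n) => h2.
  have -> : i = n.-1 by lia.
  have -> : lambda n n.-1 *+ 2 = alpha TD n n.-1 + lambda n (n - 2) by rewrite alphaD3 //; vtac.
  apply: zsD => //; apply: Q_alpha; lia.
have -> : i = n by lia.
have -> : lambda n n *+ 2 = alpha TD n n + lambda n (n - 2) by rewrite alphaD4 //; vtac.
apply: zsD => //; apply: Q_alpha; lia.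
Qed.

Definition wD n (j : nat) : int := if (j == n.-1) || (j == n) then 1 else 0.
Definition wDd n (j : nat) : int := if j == n.-1 then 1 else if j == n then -1 else 0.

Lemma D_F n (w : nat -> int) i : (4 <= n)%N -> (0 < i <= n)%N ->
  F w (alpha TD n i) =
  if (i <= n - 3)%N then F w (lambda n i *+ 2 - lambda n i.-1 - lambda n i.+1)
  else if i == (n - 2)%N then F w (lambda n (n-2) *+ 2 - lambda n (n-3) - lambda n n.-1 - lambda n n)
  else if i == n.-1 then F w (lambda n n.-1 *+ 2 - lambda n (n - 2))
  else F w (lambda n n *+ 2 - lambda n (n - 2)).
Proof.
move=> hn hi; case: ifP => h1; first by rewrite alphaD1 //; lia.
case: eqP => h2; first by rewrite h2 alphaD2.
case: eqP => h3; first by rewrite h3 alphaD3.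
have -> : i = n by lia. by rewrite alphaD4.
Qed.

Lemma D_notin n : (4 <= n)%N -> ~ rootQ TD n (lambda n n).
Proof.
move=> hn h.
have H : forall i, (0 < i <= n)%N -> (2 %| F (wD n) (alpha TD n i))%Z.
  move=> i hi; rewrite D_F //; rewrite !F_sub !F_muln !F_lambda /wD; iftac.
have := F_inv H h; rewrite F_lambda /wD; iftac.
Qed.

Lemma D_dinv n v : (4 <= n)%N -> rootQ TD n v -> (2 %| F (wDd n) v)%Z.
Proof.
move=> hn; apply: F_inv => i hi; rewrite D_F //; rewrite !F_sub !F_muln !F_lambda /wDd; iftac.
Qed.




Definition ext n (c : 'I_n -> int) (k : nat) : int :=
  if (0 < k)%N then (if insub k.-1 is Some i then c i else 0) else 0.

Lemma ext_ord n (c : 'I_n -> int) (i : 'I_n) : ext c i.+1 = c i.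
Proof.
rewrite /ext /=; case: insubP => [j _ e|]; last by rewrite ltn_ord.
by congr c; apply: val_inj.
Qed.

Lemma ext_out n (c : 'I_n -> int) k : ~~ (0 < k <= n)%N -> ext c k = 0.
Proof.
move=> h; rewrite /ext; case: ifP => // h0; case: insubP => // j _ e.
have := ltn_ord j; rewrite e; lia.
Qed.

Lemma F_lambda_ext n (c : 'I_n -> int) k : F (ext c) (lambda n k) = ext c k.
Proof. rewrite F_lambda; case: ifP => // h; by rewrite ext_out // h. Qed.

Lemma cartan_sym t n i j : t = TA \/ t = TD -> cartan t n i j = cartan t n j i.
Proof. by case=> ->; rewrite /cartan /adj eq_sym orbC. Qed.

Lemma coordQ t n (c : 'I_n -> int) (j : 'I_n) : t = TA \/ t = TD ->
  (\sum_(i < n) alpha t n i.+1 *~ c i) 0 j = F (ext c) (alpha t n j.+1).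
Proof.
move=> ht; rewrite summxE /F; apply: eq_bigr => i _.
by rewrite mxz_entry !mxE ext_ord mulrC (cartan_sym _ _ _ ht).
Qed.

Lemma ordP_all n (P : nat -> Prop) : (forall j : 'I_n, P j.+1) -> forall p, (0 < p <= n)%N -> P p.
Proof.
move=> h p hp; have hk : (p.-1 < n)%N by lia.
have := h (Ordinal hk); by rewrite /= prednK //; lia.
Qed.

Lemma par_chain (C : nat -> int) N : C 0%N = 0 ->
  (forall p, (0 < p <= N)%N -> (2 %| C p.-1 + C p.+1)%Z) ->
  forall p, (p <= N.+1)%N -> (2 %| C p - C 1%N * (p %% 2)%N%:Z)%Z.
Proof.
move=> h0 h.
suff H : forall p, (p <= N)%N -> (2 %| C p - C 1%N * (p %% 2)%N%:Z)%Z /\ (2 %| C p.+1 - C 1%N * (p.+1 %% 2)%N%:Z)%Z.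
  move=> [|p] hp; [by case: (H 0%N isT) | by case: (H p hp)].
elim => [|p IH] hp.
  split; [rewrite h0 /=; lia | rewrite /=; lia].
case: (IH (ltnW hp)) => h1 h2; split => //.
have := h p.+1 ltac:(lia); rewrite /=; lia.
Qed.

Lemma decomp t n (c s : 'I_n -> int) z :
  (forall i, (2 %| c i - z * s i)%Z) ->
  latD (lat2 (rootQ t n)) (Zmul (\sum_(i < n) alpha t n i.+1 *~ s i)) (\sum_(i < n) alpha t n i.+1 *~ c i).
Proof.
move=> h.
exists ((\sum_(i < n) alpha t n i.+1 *~ ((c i - z * s i) %/ 2)%Z) *+ 2).
exists ((\sum_(i < n) alpha t n i.+1 *~ s i) *~ z).
split.
  exists (\sum_(i < n) alpha t n i.+1 *~ ((c i - z * s i) %/ 2)%Z); split => //.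
  by exists (fun i => ((c i - z * s i) %/ 2)%Z).
split; first by exists (fun _ => z); rewrite big_ord1.
rewrite mulrz_suml -sumrMnl -big_split /=; apply: eq_bigr => i _.
have e : c i = ((c i - z * s i) %/ 2)%Z * 2 + s i * z by rewrite divzK ?h //; ring.
rewrite {1}e; vtac.
Qed.

Lemma gen_d t n a : (t = TA \/ t = TD) -> rootQ t n a -> lat2 (weightL n) a ->
 (forall c : 'I_n -> int, (forall p, (0 < p <= n)%N -> (2 %| F (ext c) (alpha t n p))%Z) ->
    exists s : 'I_n -> int, a = \sum_(i < n) alpha t n i.+1 *~ s i /\ exists z, forall i, (2 %| c i - z * s i)%Z) ->
 lat_eq (latI (rootQ t n) (lat2 (weightL n))) (latD (lat2 (rootQ t n)) (Zmul a)).
Proof.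
move=> ht ha ha2 H v; split.
  move=> [[c ec] /lat2L hv].
  have hp : forall p, (0 < p <= n)%N -> (2 %| F (ext c) (alpha t n p))%Z.
    apply: (ordP_all (P := fun p => (2 %| F (ext c) (alpha t n p))%Z)) => j.
    by rewrite -coordQ // -ec; apply: hv.
  case: (H c hp) => s [-> [z hz]]; rewrite ec; exact: decomp hz.
move=> [x [y [[w [hw ->]] [[cz ->] ->]]]]; rewrite big_ord1.
split; first by apply: zsD; [apply: zsMn | apply: zsZ].
apply/lat2L => j; rewrite mxE mulmxnE mxz_entry; move/lat2L: ha2 => /(_ j) h.
apply: rpredD; last by apply: dvdz_mulr.
by apply/dvdzP; exists (w 0 j); rewrite mulr2n; ring.
Qed.

Definition sA (n : nat) (i : 'I_n) : int := (i.+1 %% 2)%N%:Z.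

Lemma adA n : alpha_diamond TA n = \sum_(i < n) alpha TA n i.+1 *~ sA i.
Proof.
rewrite /alpha_diamond big_mkcond /=; apply: eq_bigr => i _; rewrite /sA modn2.
by case: ifP => /= h; rewrite h ?mulr1z ?mulr0z.
Qed.

Lemma ext_sA n k : ext (@sA n) k = if (0 < k <= n)%N then (k %% 2)%N%:Z else 0.
Proof.
case: ifP => h; last by rewrite ext_out // h.
have hk : (k.-1 < n)%N by lia.
have -> : k = (Ordinal hk).+1 by rewrite /= prednK //; lia.
by rewrite ext_ord.
Qed.

Lemma A_d n : odd n ->
  lat_eq (latI (rootQ TA n) (lat2 (weightL n))) (latD (lat2 (rootQ TA n)) (Zmul (alpha_diamond TA n))).
Proof.
move=> hn; apply: gen_d; first by left.
- by rewrite /alpha_diamond; apply: zs_sum => i _; apply: Q_alpha; have := ltn_ord i; lia.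
- rewrite adA; apply/lat2L => j; rewrite coordQ; last by left.
  rewrite alphaA; last by have := ltn_ord j; lia.
  rewrite !F_sub F_muln !F_lambda_ext !ext_sA; have := ltn_ord j; have : (n %% 2 = 1)%N by rewrite modn2 hn.
  iftac.
move=> c hp; exists (@sA n); split; first exact: adA.
exists (ext c 1); move=> i.
have hc : forall p, (0 < p <= n)%N -> (2 %| ext c p.-1 + ext c p.+1)%Z.
  move=> p h; have := hp p h; rewrite alphaA // !F_sub F_muln !F_lambda_ext; rewrite mulr2n.
  move: (ext c p) (ext c p.-1) (ext c p.+1) => a b d; lia.
have := @par_chain (ext c) n (ext_out c (k:=0) isT) hc i.+1 ltac:(have := ltn_ord i; lia).
by rewrite ext_ord /sA mulrC.
Qed.

Lemma A_d_neq n : odd n -> (3 <= n)%N ->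
  ~ lat_eq (latD (lat2 (rootQ TA n)) (Zmul (alpha_diamond TA n))) (lat2 (weightL n)).
Proof.
move=> hn h3 E.
case: (proj2 (E (lambda n 1 *+ 2))); first by exists (lambda n 1); split => //; apply: L_all.
move=> x [y [[w [hw ->]] [[cz ->] e]]]; move: e; rewrite big_ord1 => e.
have ha : rootQ TA n (alpha_diamond TA n).
  by rewrite /alpha_diamond; apply: zs_sum => i _; apply: Q_alpha; have := ltn_ord i; lia.
have : (n.+1%:Z %| F wid (lambda n 1 *+ 2))%Z.
  rewrite e F_add F_muln F_mulz; apply: rpredD; last by apply: dvdz_mulr; apply: F_inv ha; exact: A_F.
  rewrite mulr2n; apply: rpredD; apply: F_inv hw; exact: A_F.
rewrite F_muln F_lambda /wid; iftac.
rewrite dvdzE /= => /dvdn_leq; lia.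
Qed.

Definition sD (n : nat) (i : 'I_n) : int := if (i.+1 == n.-1) || (i.+1 == n) then 1 else 0.

Lemma adD n : (2 <= n)%N -> alpha_diamond TD n = \sum_(i < n) alpha TD n i.+1 *~ sD i.
Proof.
case: n => [|[|m]] // _; rewrite /alpha_diamond !big_ord_recr /= big1 ?add0r.
  by rewrite /sD /= !eqxx /= orbT !mulr1z.
move=> i _; rewrite /sD /=; case: ifP => h; last by rewrite mulr0z.
by exfalso; have := ltn_ord i; lia.
Qed.

Lemma Q_ad n : (2 <= n)%N -> rootQ TD n (alpha_diamond TD n).
Proof. move=> hn; rewrite /alpha_diamond; apply: zsD; apply: Q_alpha; lia. Qed.

Lemma ad_even n : (4 <= n)%N ->
  alpha_diamond TD n = (lambda n n.-1 + lambda n n - lambda n (n - 2)) *+ 2.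
Proof. move=> hn; rewrite /alpha_diamond alphaD3 // alphaD4 //; vtac. Qed.

Lemma D_d n : odd n -> (5 <= n)%N ->
  lat_eq (latI (rootQ TD n) (lat2 (weightL n))) (latD (lat2 (rootQ TD n)) (Zmul (alpha_diamond TD n))).
Proof.
move=> hn h5; have hn2 : (n %% 2 = 1)%N by rewrite modn2 hn.
apply: gen_d; first by right.
- by apply: Q_ad; lia.
- by rewrite ad_even; [exists (lambda n n.-1 + lambda n n - lambda n (n - 2)); split; [apply: L_all|] | lia].
move=> c hp; exists (@sD n); split; first by apply: adD; lia.
exists (ext c n); move=> i.
have hc : forall p, (0 < p <= n - 3)%N -> (2 %| ext c p.-1 + ext c p.+1)%Z.
  move=> p h; have := hp p ltac:(lia); rewrite D_F; try lia.
  rewrite ifT; last lia.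
  rewrite !F_sub F_muln !F_lambda_ext mulr2n.
  move: (ext c p) (ext c p.-1) (ext c p.+1) => a b d; lia.
have par := @par_chain (ext c) (n - 3) (ext_out c (k:=0) isT) hc.
have hA := hp (n - 2)%N ltac:(lia); rewrite D_F in hA; try lia.
rewrite ifF in hA; last lia. rewrite eqxx in hA.
rewrite !F_sub F_muln !F_lambda_ext mulr2n in hA.
have hB := hp n.-1 ltac:(lia); rewrite D_F in hB; try lia.
rewrite ifF in hB; last lia. rewrite ifF in hB; last lia. rewrite eqxx in hB.
rewrite !F_sub F_muln !F_lambda_ext mulr2n in hB.
have p1 := par (n - 2)%N ltac:(lia); have e1 : ((n - 2) %% 2 = 1)%N by lia.
have p2 := par (n - 3)%N ltac:(lia); have e2 : ((n - 3) %% 2 = 0)%N by lia.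
rewrite e1 mulr1 in p1; rewrite e2 mulr0 in p2.
rewrite -ext_ord /sD.
case: (ltnP i.+1 n.-1) => hi.
  rewrite ifF; last by lia.
  have p3 := par i.+1 ltac:(lia).
  have [e|e] : ((i.+1 %% 2 = 0) \/ (i.+1 %% 2 = 1))%N by lia.
    rewrite e mulr0 in p3. move: p1 p3 hB; rewrite mulr0.
    move: (ext c i.+1) (ext c 1) (ext c (n - 2)) (ext c n.-1) => a b d f; lia.
  rewrite e mulr1 in p3. move: p1 p3 hB; rewrite mulr0.
  move: (ext c i.+1) (ext c 1) (ext c (n - 2)) (ext c n.-1) => a b d f; lia.
rewrite ifT; last by have := ltn_ord i; lia. rewrite mulr1.
have [e|e] : (i.+1 = n.-1 \/ i.+1 = n)%N by have := ltn_ord i; lia.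
  rewrite e; move: p2 hA; move: (ext c n.-1) (ext c n) (ext c (n - 2)) (ext c (n - 3)) => a b d f; lia.
rewrite e; move=> {e}; move: (ext c n) => a; lia.
Qed.


Ltac iftac2 := repeat (case: ifP => ?; try (exfalso; lia)); rewrite ?mulr2n; try lia.
Lemma F_ad0 n : (4 <= n)%N -> F (wDd n) (alpha_diamond TD n) = 0.
Proof.
move=> hn; rewrite /alpha_diamond F_add !D_F; try lia.
rewrite !F_sub !F_muln !F_lambda /wDd; iftac2.
Qed.

Lemma D_d_neq n : (5 <= n)%N ->
  ~ lat_eq (latD (lat2 (rootQ TD n)) (Zmul (alpha_diamond TD n))) (lat2 (weightL n)).
Proof.
move=> h5 E.
case: (proj2 (E (lambda n n *+ 2))); first by exists (lambda n n); split => //; apply: L_all.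
move=> x [y [[w [hw ->]] [[cz ->] e]]]; move: e; rewrite big_ord1 => e.
have := D_dinv (ltnW h5) hw; have := congr1 (F (wDd n)) e.
rewrite F_add F_muln F_mulz F_ad0 ?mul0r ?addr0 ?F_muln ?F_lambda /wDd; try lia.
iftac2; move: (F (wDd n) w) => a; lia.
Qed.

Definition vv n (v : 'rV[int]_n) (k : nat) : int := if insub k is Some o then v 0 o else 0.

Lemma vvE n (v : 'rV[int]_n) (j : 'I_n) : v 0 j = vv v j.
Proof. rewrite /vv; case: insubP => [o _ e|]; [by congr (v 0 _); apply: val_inj | by rewrite ltn_ord]. Qed.

Lemma F_wDd n (v : 'rV[int]_n) : (2 <= n)%N -> F (wDd n) v = vv v (n - 2) - vv v (n - 1).
Proof.
case: n v => [|[|m]] v // _; rewrite /F !big_ord_recr /= big1 ?add0r.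
  rewrite /wDd /= eqxx /= ifF; last lia.
  rewrite eqxx !mul1r mulN1r !vvE /=; have -> : (m.+2 - 2 = m)%N by lia.
  by have -> : (m.+2 - 1 = m.+1)%N by lia.
move=> i _; rewrite /wDd /=; rewrite ifF; last by have := ltn_ord i; lia.
rewrite ifF ?mul0r //; have := ltn_ord i; lia.
Qed.

Lemma S_entry n N (ee : nat -> int) (j : 'I_n) : (N <= n)%N ->
  (\sum_(i < N) (lambda n i.+1 *+ 2) *~ ee i) 0 j = if (j < N)%N then ee j *+ 2 else 0.
Proof.
move=> hN; rewrite summxE; case: ifP => hj.
  rewrite (bigD1 (Ordinal hj)) //= big1 ?addr0.
    by rewrite mxz_entry mulmxnE mxE eqxx /= mulr2n; ring.
  move=> i hi; rewrite mxz_entry mulmxnE mxE; case: eqP => [e|_]; last by rewrite mul0rn mul0r.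
  by case/eqP: hi; apply: val_inj => /=; lia.
rewrite big1 // => i _; rewrite mxz_entry mulmxnE mxE; case: eqP => [e|_]; last by rewrite mul0rn mul0r.
exfalso; have := ltn_ord i; lia.
Qed.

Lemma ev_mul4 (a c : int) : (2 %| (a *+ 4) * c)%Z.
Proof. apply: dvdz_mulr; apply/dvdzP; exists (a *+ 2); rewrite !mulr2n -mulr_natl; ring. Qed.
Lemma ev_mul2 (a c : int) : (2 %| (a *+ 2) * c)%Z.
Proof. apply: dvdz_mulr; apply/dvdzP; exists a; rewrite mulr2n; ring. Qed.

Lemma moreover n : (5 <= n)%N -> odd n ->
     lat_eq (latD (lat2 (rootQ TD n)) (Zmul (alpha_diamond TD n)))
            (latD (latD (latD (Zmul (lambda n n.-1 *+ 4)) (Zmul (lambda n n *+ 4)))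
                        (Zmul (alpha_diamond TD n)))
                  (zspan (fun i : 'I_(n - 2) => lambda n i.+1 *+ 2))).
Proof.
move=> h5 hn v; split.
- move=> hv.
  have [hQ /lat2L hv2] := proj2 (D_d hn h5 v) hv.
  have h4 : (4 %| vv v (n - 2) - vv v (n - 1))%Z.
    move: hv => [x [y [[w [hw ->]] [[cz ->] ->]]]]; rewrite big_ord1.
    rewrite -F_wDd; last lia. rewrite F_add F_muln F_mulz F_ad0; last lia.
    have := D_dinv (ltnW h5) hw; rewrite mul0r addr0; move: (F (wDd n) w) => a; rewrite mulr2n; lia.
  have hev : forall k, (k < n)%N -> (2 %| vv v k)%Z.
    by move=> k hk; have := hv2 (Ordinal hk); rewrite vvE.
  pose y := (vv v (n - 1) %/ 2)%Z. pose x := (vv v (n - 2) %/ 2)%Z.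
  pose ee k := ((vv v k %/ 2)%Z + (if k == (n - 3)%N then y else 0)).
  exists (((lambda n n.-1 *+ 4) *~ ((x - y) %/ 2)%Z + (lambda n n *+ 4) *~ 0) + alpha_diamond TD n *~ y).
  exists (\sum_(i < n - 2) (lambda n i.+1 *+ 2) *~ ee i).
  split.
    exists ((lambda n n.-1 *+ 4) *~ ((x - y) %/ 2)%Z + (lambda n n *+ 4) *~ 0), (alpha_diamond TD n *~ y).
    split; last by split => //; exists (fun _ => y); rewrite big_ord1.
    exists ((lambda n n.-1 *+ 4) *~ ((x - y) %/ 2)%Z), ((lambda n n *+ 4) *~ 0).
    split; first by exists (fun _ => ((x - y) %/ 2)%Z); rewrite big_ord1.
    by split => //; exists (fun _ => 0); rewrite big_ord1.
  split; first by exists (fun i : 'I_(n - 2) => ee i).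
  apply/rowP => j; rewrite mxE S_entry; last lia.
  rewrite ad_even; last lia.
  rewrite !(mxE, mulmxnE, mxz_entry) vvE.
  have hj := hev j (ltn_ord j).
  have h1 := hev (n - 2)%N ltac:(lia). have h2 := hev (n - 1)%N ltac:(lia).
  rewrite /ee /x /y.
  have [e|[e|[e|e]]] : (j < n - 3 \/ nat_of_ord j = n - 3 \/ nat_of_ord j = n - 2 \/ nat_of_ord j = n - 1)%N by have := ltn_ord j; lia.
  1-4: move: hj; rewrite ?e => hj.
  1-4: repeat (case: eqP => ?; try (exfalso; lia)); repeat (case: ifP => ?; try (exfalso; lia)).
  1-4: rewrite /= ?mulr2n; lia.
- move=> [x [s [[x1 [s1 [[y1 [y2 [[c1 ->] [[c2 ->] ->]]]] [[c3 ->] ->]]]] [[c4 ->] ->]]]].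
  rewrite !big_ord1.
  apply: (proj1 (D_d hn h5 _)); split.
    have [q1 q2] := D_four_top (ltnW h5).
    apply: zsD; first apply: zsD; first apply: zsD.
    - exact: zsZ.
    - exact: zsZ.
    - by apply: zsZ; apply: Q_ad; lia.
    - apply: zs_sum => i _; apply: zsZ; apply: D_two_low; have := ltn_ord i; lia.
  apply/lat2L => j; rewrite ad_even; last lia.
  rewrite !mxE !mxz_entry !mulmxnE summxE.
  apply: rpredD; first apply: rpredD; first apply: rpredD.
  - exact: ev_mul4.
  - exact: ev_mul4.
  - exact: ev_mul2.
  - by apply: rpred_sum => i _; rewrite mxz_entry mulmxnE; apply: ev_mul2.
Qed.

Definition fsum (G : nat -> int) n := foldr (fun i a => G i + a) 0 (iota 0 n).

Lemma fsumE (G : nat -> int) n : \sum_(i < n) G i = fsum G n.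
Proof.
rewrite -(big_mkord xpredT G) /index_iota subn0 /fsum.
elim: (iota 0 n) => [|a s IH]; by rewrite ?big_nil ?big_cons ?IH.
Qed.

Definition chk_mem t n N (tab : seq (seq int)) k :=
  all (fun j => ((j.+1 == k)%:R *+ N == fsum (fun i => cartan t n i.+1 j.+1 * nth 0 (nth [::] tab k.-1) i) n))
      (iota 0 n).

Lemma mem_chk t n N tab k : chk_mem t n N tab k -> rootQ t n (lambda n k *+ N).
Proof.
move/allP => h; exists (fun i : 'I_n => nth 0 (nth [::] tab k.-1) i).
apply/rowP => j; rewrite mulmxnE mxE summxE.
have := h j; rewrite mem_iota /= => /(_ (ltn_ord j)) /eqP ->.
rewrite -fsumE; apply: eq_bigr => i _; by rewrite mxz_entry mxE.
Qed.

Lemma mem_all t n N tab : all (chk_mem t n N tab) (iota 1 n) ->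
  forall i, (0 < i <= n)%N -> rootQ t n (lambda n i *+ N).
Proof. move/allP => h i hi; apply: mem_chk; apply: h; rewrite mem_iota; lia. Qed.

Definition chk_F t n (w : seq int) (m : int) :=
  all (fun i => (m %| fsum (fun j => nth 0 w j * cartan t n i j.+1) n)%Z) (iota 1 n).

Lemma notin_chk t n w m k : chk_F t n w m -> ~~ (m %| nth 0 w k.-1)%Z -> (0 < k <= n)%N ->
  ~ rootQ t n (lambda n k).
Proof.
move=> /allP h hk hkn hQ.
have H : forall i, (0 < i <= n)%N -> (m %| F (fun k => nth 0 w k.-1) (alpha t n i))%Z.
  move=> i hi; have := h i; rewrite mem_iota => /(_ ltac:(lia)).
  rewrite /F -fsumE; congr (_ %| _)%Z; apply: eq_bigr => j _; by rewrite mxE.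
have := F_inv H hQ; rewrite F_lambda hkn /= => hd; by rewrite hd in hk.
Qed.

Definition tabE6 : seq (seq int) := [:: [:: 4; 3; 5; 6; 4; 2]; [:: 3; 6; 6; 9; 6; 3]; [:: 5; 6; 10; 12; 8; 4]; [:: 6; 9; 12; 18; 12; 6]; [:: 4; 6; 8; 12; 10; 5]; [:: 2; 3; 4; 6; 5; 4]].
Definition tabE7 : seq (seq int) := [:: [:: 4; 4; 6; 8; 6; 4; 2]; [:: 4; 7; 8; 12; 9; 6; 3]; [:: 6; 8; 12; 16; 12; 8; 4]; [:: 8; 12; 16; 24; 18; 12; 6]; [:: 6; 9; 12; 18; 15; 10; 5]; [:: 4; 6; 8; 12; 10; 8; 4]; [:: 2; 3; 4; 6; 5; 4; 3]].
Definition tabE8 : seq (seq int) := [:: [:: 4; 5; 7; 10; 8; 6; 4; 2]; [:: 5; 8; 10; 15; 12; 9; 6; 3]; [:: 7; 10; 14; 20; 16; 12; 8; 4]; [:: 10; 15; 20; 30; 24; 18; 12; 6]; [:: 8; 12; 16; 24; 20; 15; 10; 5]; [:: 6; 9; 12; 18; 15; 12; 8; 4]; [:: 4; 6; 8; 12; 10; 8; 6; 3]; [:: 2; 3; 4; 6; 5; 4; 3; 2]].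
Definition tabF4 : seq (seq int) := [:: [:: 2; 3; 4; 2]; [:: 3; 6; 8; 4]; [:: 2; 4; 6; 3]; [:: 1; 2; 3; 2]].
Definition tabG2 : seq (seq int) := [:: [:: 2; 1]; [:: 3; 2]].

Lemma E6_mem : forall i, (0 < i <= 6)%N -> rootQ TE 6 (lambda 6 i *+ 3).
Proof. apply: (mem_all (tab := tabE6)); by vm_compute. Qed.
Lemma E7_mem : forall i, (0 < i <= 7)%N -> rootQ TE 7 (lambda 7 i *+ 2).
Proof. apply: (mem_all (tab := tabE7)); by vm_compute. Qed.
Lemma E8_mem : forall i, (0 < i <= 8)%N -> rootQ TE 8 (lambda 8 i).
Proof. move=> i hi; rewrite -[lambda 8 i]mulr1n; move: i hi; apply: (mem_all (tab := tabE8)); by vm_compute. Qed.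
Lemma F4_mem : forall i, (0 < i <= 4)%N -> rootQ TF 4 (lambda 4 i).
Proof. move=> i hi; rewrite -[lambda 4 i]mulr1n; move: i hi; apply: (mem_all (tab := tabF4)); by vm_compute. Qed.
Lemma G2_mem : forall i, (0 < i <= 2)%N -> rootQ TG 2 (lambda 2 i).
Proof. move=> i hi; rewrite -[lambda 2 i]mulr1n; move: i hi; apply: (mem_all (tab := tabG2)); by vm_compute. Qed.

Lemma E6_notin : ~ rootQ TE 6 (lambda 6 1).
Proof. apply: (@notin_chk _ _ [:: 1; 0; 2; 0; 1; 2] 3); by vm_compute. Qed.
Lemma E7_notin : ~ rootQ TE 7 (lambda 7 2).
Proof. apply: (@notin_chk _ _ [:: 0; 1; 0; 0; 1; 0; 1] 2); by vm_compute. Qed.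

Theorem proposition2p2 :
  (* (a) A_{2k} (k >= 1), E_6 *)
  (forall (t : dynkin) (n : nat),
     ((t = TA /\ exists k : nat, (1 <= k)%N /\ n = (2 * k)%N) \/ (t = TE /\ n = 6%N)) ->
     lat_eq (latI (rootQ t n) (lat2 (weightL n))) (lat2 (rootQ t n)) /\
     ~ lat_eq (lat2 (rootQ t n)) (lat2 (weightL n))) /\
  (* (b) A_1, B_n, C_n, D_{2k+2} (k >= 1), E_7 *)
  (forall (t : dynkin) (n : nat),
     (t = TA /\ n = 1%N) \/ (t = TB /\ (2 <= n)%N) \/ (t = TC /\ (2 <= n)%N) \/
     (t = TD /\ (exists k : nat, (1 <= k)%N /\ n = (2 * k + 2)%N)) \/ (t = TE /\ n = 7%N) ->
     lat_eq (latI (rootQ t n) (lat2 (weightL n))) (lat2 (weightL n)) /\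
     ~ lat_eq (lat2 (weightL n)) (lat2 (rootQ t n))) /\
  (* (c) E_8, F_4, G_2 *)
  (forall (t : dynkin) (n : nat),
     (t = TE /\ n = 8%N) \/ (t = TF /\ n = 4%N) \/ (t = TG /\ n = 2%N) ->
     lat_eq (latI (rootQ t n) (lat2 (weightL n))) (lat2 (weightL n)) /\
     lat_eq (lat2 (weightL n)) (lat2 (rootQ t n))) /\
  (* (d) A_{2k+1}, D_{2k+3} (k >= 1) *)
  (forall (t : dynkin) (n : nat),
     (exists k : nat, (1 <= k)%N /\
        ((t = TA /\ n = (2 * k + 1)%N) \/ (t = TD /\ n = (2 * k + 3)%N))) ->
     lat_eq (latI (rootQ t n) (lat2 (weightL n)))
            (latD (lat2 (rootQ t n)) (Zmul (alpha_diamond t n))) /\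
     ~ lat_eq (latD (lat2 (rootQ t n)) (Zmul (alpha_diamond t n))) (lat2 (weightL n))) /\
  (* moreover: D_n, n odd (n >= 5) *)
  (forall n : nat, (5 <= n)%N -> odd n ->
     lat_eq (latD (lat2 (rootQ TD n)) (Zmul (alpha_diamond TD n)))
            (latD (latD (latD (Zmul (lambda n n.-1 *+ 4)) (Zmul (lambda n n *+ 4)))
                        (Zmul (alpha_diamond TD n)))
                  (zspan (fun i : 'I_(n - 2) => lambda n i.+1 *+ 2)))).
Proof.
split.
  move=> t n [[-> [k [hk ->]]] | [-> ->]].
    split.
      apply: (@gen_odd _ _ (2 * k).+1); first by rewrite /= oddM.
      by move=> i hi; apply: A_mult; lia.
    by apply: (@gen_neq_a _ _ (lambda (2 * k) 1)); apply: A_notin; lia.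
  split; first by apply: (@gen_odd _ _ 3) => //; exact: E6_mem.
  exact: gen_neq_a E6_notin.
split.
  move=> t n [[-> ->]|[[-> hn]|[[-> hn]|[[-> [k [hk ->]]]|[-> ->]]]]].
  - split; first by apply: gen_two => i hi; apply: (@A_mult 1); lia.
    by apply: gen_neq_b; apply: A_notin.
  - split; first by apply: gen_two => i hi; exact: B_two.
    exact: gen_neq_b (B_notin hn).
  - split; first by apply: gen_two => i hi; exact: C_two.
    exact: gen_neq_b (C_notin hn).
  - split; first by apply: gen_two; apply: (@D_two_even _ k) => //; lia.
    by apply: gen_neq_b; apply: D_notin; lia.
  - split; first by apply: gen_two; exact: E7_mem.
    exact: gen_neq_b E7_notin.
split.
  move=> t n [[-> ->]|[[-> ->]|[-> ->]]]; apply: gen_all; [exact: E8_mem|exact: F4_mem|exact: G2_mem].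
split.
  move=> t n [k [hk [[-> ->]|[-> ->]]]].
    have ho : odd (2 * k + 1) by rewrite addn1 /= oddM.
    split; [exact: A_d | apply: A_d_neq => //; lia].
  have ho : odd (2 * k + 3) by rewrite addn3 /= oddM.
  split; [apply: D_d => //; lia | apply: D_d_neq; lia].
move=> n h5 hn; exact: moreover.
Qed.
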